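(* As $n\to\infty$, $ex_{bip}(n,C_6,C_8)=n^3+O(n^{5/2})$.
   Context: $C_k$ denotes the cycle with $k$ vertices. $ex_{bip}(n,C_{6},C_{8})$ denotes the maximum number of subgraphs isomorphic to $C_6$ in a bipartite graph on $n$ vertices that contains no subgraph isomorphic to $C_8$. *)

(* Defs.v *)
From mathcomp Require Import all_boot all_order all_algebra.
From mathcomp Require Import reals exp.
Set Implicit Arguments. Unset Strict Implicit. Unset Printing Implicit Defensive.

Definition simple_graph n (E : {set {set 'I_n}}) : bool :=
  [forall e in E, #|e| == 2].

Definition bipartite n (E : {set {set 'I_n}}) : bool :=
  [exists A : {set 'I_n}, [forall e in E, #|e :&: A| == 1]].

Definition cycle_edges k n (f : {ffun 'I_k -> 'I_n}) : {set {set 'I_n}} :=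
  [set [set f i; f (ordS i)] | i : 'I_k].

Definition is_Ck_edges k n (S : {set {set 'I_n}}) : bool :=
  [exists f : {ffun 'I_k -> 'I_n}, injectiveb f && (S == cycle_edges f)].

(* Number of subgraphs of E isomorphic to C_k (a cycle subgraph is
   determined by its edge set). *)
Definition num_Ck k n (E : {set {set 'I_n}}) : nat :=
  #|[set S : {set {set 'I_n}} | (S \subset E) && is_Ck_edges k S]|.

Definition Ck_free k n (E : {set {set 'I_n}}) : bool := num_Ck k E == 0.

Definition ex_bip_C6_C8 (n : nat) : nat :=
  \max_(E : {set {set 'I_n}} | [&& simple_graph E, bipartite E & Ck_free 8 E])
     num_Ck 6 E.

(* Main.v *)
Require Import Defs.
From mathcomp Require Import all_boot all_order all_algebra.
From mathcomp Require Import zify.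
Set Implicit Arguments. Unset Strict Implicit. Unset Printing Implicit Defensive.

Lemma ordeqE n (a b : 'I_n) : (a == b) = (nat_of_ord a == nat_of_ord b)%N.
Proof. by []. Qed.

Lemma uniq_interleave (T : eqType) (a1 a2 a3 a4 b1 b2 b3 b4 : T) :
  uniq [:: a1;b1;a2;b2;a3;b3;a4;b4] = uniq ([:: a1;a2;a3;a4] ++ [:: b1;b2;b3;b4]).
Proof. by apply: perm_uniq; apply/permP => p /=; lia. Qed.

Section Graph.
Variable n : nat.
Variable E : {set {set 'I_n}}.
Definition adj (u v : 'I_n) := [set u; v] \in E.
Lemma adjC u v : adj u v = adj v u.
Proof. by rewrite /adj setUC. Qed.

Hypothesis hfree : Ck_free 8 E.

Lemma noC8_gen (a1 b1 a2 b2 a3 b3 a4 b4 : 'I_n) :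
  uniq [:: a1;b1;a2;b2;a3;b3;a4;b4] ->
  adj a1 b1 -> adj b1 a2 -> adj a2 b2 -> adj b2 a3 -> adj a3 b3 -> adj b3 a4 ->
  adj a4 b4 -> adj b4 a1 -> False.
Proof.
move=> hu h1 h2 h3 h4 h5 h6 h7 h8.
set s := [:: a1;b1;a2;b2;a3;b3;a4;b4].
pose f := [ffun i : 'I_8 => nth a1 s i].
have finj : injectiveb f.
  apply/injectiveP => i j; rewrite !ffunE => /eqP.
  by rewrite nth_uniq // => /eqP /val_inj.
have fsub : cycle_edges f \subset E.
  apply/subsetP => e /imsetP [i _ ->]; rewrite !ffunE.
  case: i => [[|[|[|[|[|[|[|[|k]]]]]]]] Hk] //=.
move: hfree; rewrite /Ck_free /num_Ck cards_eq0 => /eqP /setP /(_ (cycle_edges f)).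
rewrite !inE fsub /= => /negbT /negP; apply.
by apply/existsP; exists f; rewrite finj eqxx.
Qed.

Definition tup := ('I_n * 'I_n * 'I_n * 'I_n * 'I_n * 'I_n)%type.
Definition cyc6' a b c d e g :=
  [&& uniq [:: a;b;c;d;e;g], adj a b, adj b c, adj c d, adj d e, adj e g & adj g a].
Arguments cyc6' : simpl never.
Definition cyc6 (t : tup) : bool := let: (a,b,c,d,e,g) := t in cyc6' a b c d e g.
Definition E6' (a b c d e g : 'I_n) : {set {set 'I_n}} :=
  [set [set a;b]; [set b;c]; [set c;d]; [set d;e]; [set e;g]; [set g;a]].
Arguments E6' : simpl never.
Definition E6 (t : tup) : {set {set 'I_n}} := let: (a,b,c,d,e,g) := t in E6' a b c d e g.
Definition trot (t : tup) : tup := let: (a,b,c,d,e,g) := t in (b,c,d,e,g,a).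
Definition trefl (t : tup) : tup := let: (a,b,c,d,e,g) := t in (a,g,e,d,c,b).

Lemma cyc6_rot t : cyc6 (trot t) = cyc6 t.
Proof.
case: t => [[[[[a b] c] d] e] g] /=; rewrite /cyc6'.
rewrite -(rot_uniq 1 [:: a;b;c;d;e;g]).
by case: (uniq _); case: (adj a b); case: (adj b c); case: (adj c d);
  case: (adj d e); case: (adj e g); case: (adj g a).
Qed.

Lemma cyc6_refl t : cyc6 (trefl t) = cyc6 t.
Proof.
case: t => [[[[[a b] c] d] e] g] /=; rewrite /cyc6'.
have -> : uniq [:: a;g;e;d;c;b] = uniq [:: a;b;c;d;e;g].
  by rewrite -(rev_uniq [:: a;b;c;d;e;g]) -(rot_uniq 5 (rev _)).
rewrite (adjC a g) (adjC g e) (adjC e d) (adjC d c) (adjC c b) (adjC b a).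
by case: (uniq _); case: (adj a b); case: (adj b c); case: (adj c d);
  case: (adj d e); case: (adj e g); case: (adj g a).
Qed.

Lemma E6_rot t : E6 (trot t) = E6 t.
Proof.
case: t => [[[[[a b] c] d] e] g] /=; rewrite /E6'.
apply/setP => s; rewrite !inE.
by case: (s == [set a; b]); case: (s == [set b; c]); case: (s == [set c; d]);
  case: (s == [set d; e]); case: (s == [set e; g]); case: (s == [set g; a]).
Qed.

Lemma E6_refl t : E6 (trefl t) = E6 t.
Proof.
case: t => [[[[[a b] c] d] e] g] /=; rewrite /E6'.
rewrite (setUC [set a] [set g]) (setUC [set g] [set e]) (setUC [set e] [set d])
  (setUC [set d] [set c]) (setUC [set c] [set b]) (setUC [set b] [set a]).
apply/setP => s; rewrite !inE.
by case: (s == [set a; b]); case: (s == [set b; c]); case: (s == [set c; d]);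
  case: (s == [set d; e]); case: (s == [set e; g]); case: (s == [set g; a]).
Qed.

Definition i6 (k : nat) (H : k < 6) : 'I_6 := Ordinal H.
Lemma ordS_i6 k (H : k < 5) (H' : k.+1 < 6) : ordS (@Ordinal 6 k (ltnW H')) = Ordinal H'.
Proof. by apply: val_inj; rewrite /= modn_small. Qed.

Lemma C6_tup (S : {set {set 'I_n}}) : S \subset E -> is_Ck_edges 6 S ->
  exists t, cyc6 t /\ S = E6 t.
Proof.
move=> SE /existsP [f /andP [/injectiveP finj /eqP eS]]; subst S.
pose o0 := @Ordinal 6 0 isT. pose o1 := @Ordinal 6 1 isT. pose o2 := @Ordinal 6 2 isT.
pose o3 := @Ordinal 6 3 isT. pose o4 := @Ordinal 6 4 isT. pose o5 := @Ordinal 6 5 isT.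
exists (f o0, f o1, f o2, f o3, f o4, f o5).
have e0 : ordS o0 = o1 by apply: val_inj.
have e1 : ordS o1 = o2 by apply: val_inj.
have e2 : ordS o2 = o3 by apply: val_inj.
have e3 : ordS o3 = o4 by apply: val_inj.
have e4 : ordS o4 = o5 by apply: val_inj.
have e5 : ordS o5 = o0 by apply: val_inj.
have cE : cycle_edges f = E6 (f o0, f o1, f o2, f o3, f o4, f o5).
  apply/setP => s; rewrite /E6 /E6' !inE; apply/imsetP/idP.
    case=> i _ ->.
    have : i \in [:: o0; o1; o2; o3; o4; o5].
      by case: i => [[|[|[|[|[|[|k]]]]]] Hk] //; rewrite !inE -!val_eqE.
    rewrite !inE => /orP [|/orP[|/orP[|/orP[|/orP[|]]]]] /eqP ->; rewrite ?e0 ?e1 ?e2 ?e3 ?e4 ?e5 eqxx ?orbT //.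
  move=> /orP [/orP [/orP [/orP [/orP [|]|]|]|]|] /eqP ->.
  - by exists o0; rewrite ?e0.
  - by exists o1; rewrite ?e1.
  - by exists o2; rewrite ?e2.
  - by exists o3; rewrite ?e3.
  - by exists o4; rewrite ?e4.
  - by exists o5; rewrite ?e5.
have hE : forall i, adj (f i) (f (ordS i)).
  move=> i; rewrite /adj; apply: (subsetP SE).
  by apply: imset_f.
split => //.
have := hE o0; rewrite e0 => h0. have := hE o1; rewrite e1 => h1.
have := hE o2; rewrite e2 => h2. have := hE o3; rewrite e3 => h3.
have := hE o4; rewrite e4 => h4. have := hE o5; rewrite e5 => h5.
rewrite /cyc6 /cyc6' h0 h1 h2 h3 h4 h5 !andbT.
by rewrite /= !inE !(inj_eq finj) -!val_eqE.
Qed.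


Lemma tup_C6 a b c d e g : cyc6 (a,b,c,d,e,g) ->
  (E6 (a,b,c,d,e,g) \subset E) && is_Ck_edges 6 (E6 (a,b,c,d,e,g)).
Proof.
move=> hc.
pose f := [ffun i : 'I_6 => nth a [:: a;b;c;d;e;g] i].
pose o0 := @Ordinal 6 0 isT. pose o1 := @Ordinal 6 1 isT. pose o2 := @Ordinal 6 2 isT.
pose o3 := @Ordinal 6 3 isT. pose o4 := @Ordinal 6 4 isT. pose o5 := @Ordinal 6 5 isT.
have e0 : ordS o0 = o1 by apply: val_inj.
have e1 : ordS o1 = o2 by apply: val_inj.
have e2 : ordS o2 = o3 by apply: val_inj.
have e3 : ordS o3 = o4 by apply: val_inj.
have e4 : ordS o4 = o5 by apply: val_inj.
have e5 : ordS o5 = o0 by apply: val_inj.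
have cE : cycle_edges f = E6 (f o0, f o1, f o2, f o3, f o4, f o5).
  apply/setP => s; rewrite /E6 /E6' !inE; apply/imsetP/idP.
    case=> i _ ->.
    have : i \in [:: o0; o1; o2; o3; o4; o5].
      by case: i => [[|[|[|[|[|[|k]]]]]] Hk] //; rewrite !inE -!val_eqE.
    rewrite !inE => /orP [|/orP[|/orP[|/orP[|/orP[|]]]]] /eqP ->; rewrite ?e0 ?e1 ?e2 ?e3 ?e4 ?e5 eqxx ?orbT //.
  move=> /orP [/orP [/orP [/orP [/orP [|]|]|]|]|] /eqP ->.
  - by exists o0; rewrite ?e0.
  - by exists o1; rewrite ?e1.
  - by exists o2; rewrite ?e2.
  - by exists o3; rewrite ?e3.
  - by exists o4; rewrite ?e4.
  - by exists o5; rewrite ?e5.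
rewrite !ffunE /= in cE.
move: hc => /and5P [hu h1 h2 h3 /and3P [h4 h5 h6]].
apply/andP; split.
  apply/subsetP => S; rewrite /E6 /E6' !inE.
  by move=> /orP [/orP [/orP [/orP [/orP [|]|]|]|]|] /eqP ->.
apply/existsP; exists f; rewrite [E6 _]/= -cE eqxx andbT.
apply/injectiveP => i j; rewrite !ffunE => /eqP.
by rewrite nth_uniq // => /eqP /val_inj.
Qed.

Section Bip.
Variable A : {set 'I_n}.
Hypothesis hbip : forall u v, adj u v -> (u \in A) = (v \notin A).

Lemma adj_neq u v : adj u v -> u != v.
Proof. by move=> h; apply/eqP => e; move: (hbip h); rewrite e; case: (v \in A). Qed.

Lemma adjA u v : adj u v -> u \in A -> v \notin A.
Proof. by move=> h; rewrite (hbip h). Qed.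
Lemma adjB u v : adj u v -> u \notin A -> v \in A.
Proof. by move=> h; rewrite (hbip h) negbK. Qed.

Lemma noC8 (a1 a2 a3 a4 b1 b2 b3 b4 : 'I_n) :
  a1 \in A -> a2 \in A -> a3 \in A -> a4 \in A ->
  uniq [:: a1;a2;a3;a4] -> uniq [:: b1;b2;b3;b4] ->
  adj a1 b1 -> adj b1 a2 -> adj a2 b2 -> adj b2 a3 -> adj a3 b3 -> adj b3 a4 ->
  adj a4 b4 -> adj b4 a1 -> False.
Proof.
move=> A1 A2 A3 A4 ua ub h1 h2 h3 h4 h5 h6 h7 h8.
apply: (noC8_gen _ h1 h2 h3 h4 h5 h6 h7 h8).
rewrite uniq_interleave.
rewrite cat_uniq ua ub andbT andTb.
have B1 := adjA h1 A1. have B2 := adjA h3 A2. have B3 := adjA h5 A3. have B4 := adjA h7 A4.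
have Ball : all (fun b => b \notin A) [:: b1;b2;b3;b4] by rewrite /= B1 B2 B3 B4.
have Aall : all (fun a => a \in A) [:: a1;a2;a3;a4] by rewrite /= A1 A2 A3 A4.
apply/hasPn => b bin; apply/negP => ain.
by move/allP: Ball => /(_ b bin); move/allP: Aall => /(_ b ain) ->.
Qed.
End Bip.
End Graph.


Lemma sort3 (x0 x2 x4 y0 y2 y4 : nat) : x0 < x2 -> x2 < x4 -> y0 < y2 -> y2 < y4 ->
  [|| y0 == x0, y0 == x2 | y0 == x4] ->
  [|| y2 == x0, y2 == x2 | y2 == x4] ->
  [|| y4 == x0, y4 == x2 | y4 == x4] -> [/\ y0 = x0, y2 = x2 & y4 = x4].
Proof. move=> *; split; lia. Qed.

Lemma order3 (x y z : nat) : x != y -> y != z -> x != z ->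
  ((x < y) && (y < z)) \/ ((y < z) && (z < x)) \/ ((z < x) && (x < y)) \/
  ((x < z) && (z < y)) \/ ((y < x) && (x < z)) \/ ((z < y) && (y < x)).
Proof. move=> *; lia. Qed.

Lemma uniq6P (T:eqType) (a b c d e g : T) : uniq [:: a;b;c;d;e;g] ->
  [/\ [/\ a != b, a != c, a != d, a != e & a != g],
      [/\ b != c, b != d, b != e & b != g],
      [/\ c != d, c != e & c != g],
      [/\ d != e & d != g] & e != g].
Proof.
rewrite /= !inE !negb_or !andbT.
by case/and5P => /and5P [-> -> -> -> ->] /and4P [-> -> -> ->] /and3P [-> -> ->] /andP [-> ->] ->.
Qed.

Ltac neqs := solve [rewrite /= ?inE ?negb_or ?andbT; repeat (apply/andP; split); by [|rewrite eq_sym]].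

Lemma notin3 (T : eqType) (v x y z : T) : v \notin [:: x;y;z] -> [/\ v != x, v != y & v != z].
Proof. by rewrite !inE !negb_or => /and3P. Qed.

Section Main.
Variable n : nat.
Variable E : {set {set 'I_n}}.
Hypothesis hfree : Ck_free 8 E.
Local Notation adj := (adj E).
Local Notation cyc6 := (cyc6 E).
Local Notation tup := (tup n).

Definition p0 (t : tup) := t.1.1.1.1.1.
Definition p1 (t : tup) := t.1.1.1.1.2.
Definition p2 (t : tup) := t.1.1.1.2.
Definition p3 (t : tup) := t.1.1.2.
Definition p4 (t : tup) := t.1.2.
Definition p5 (t : tup) := t.2.
Arguments p0 / t. Arguments p1 / t. Arguments p2 / t.
Arguments p3 / t. Arguments p4 / t. Arguments p5 / t.

Lemma cyc6P a b c d e g : cyc6 (a,b,c,d,e,g) ->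
  uniq [:: a;b;c;d;e;g] /\ [/\ adj a b, adj b c, adj c d, adj d e & adj e g /\ adj g a].
Proof. by move=> /and5P [-> -> -> -> /and3P [-> -> ->]]. Qed.

Definition two_adj v x y z := [|| adj v x && adj v y, adj v y && adj v z | adj v z && adj v x].

Lemma two_adj_rot v x y z : two_adj v y z x = two_adj v x y z.
Proof. by rewrite /two_adj; case: (adj v x); case: (adj v y); case: (adj v z). Qed.
Lemma two_adj_rev v x y z : two_adj v z y x = two_adj v x y z.
Proof. by rewrite /two_adj; case: (adj v x); case: (adj v y); case: (adj v z). Qed.

Lemma mem3_rot (T : eqType) (v x y z : T) : (v \in [:: y; z; x]) = (v \in [:: x; y; z]).
Proof. by rewrite !inE; case: (v == x); case: (v == y); case: (v == z). Qed.
Lemma mem3_rev (T : eqType) (v x y z : T) : (v \in [:: z; y; x]) = (v \in [:: x; y; z]).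
Proof. by rewrite !inE; case: (v == x); case: (v == y); case: (v == z). Qed.

Lemma mem3_swap (T : eqType) (v x y z : T) : (v \in [:: x; z; y]) = (v \in [:: x; y; z]).
Proof. by rewrite !inE; case: (v == x); case: (v == y); case: (v == z). Qed.

Section Bip2.
Variable A : {set 'I_n}.
Hypothesis hbip : forall u v, adj u v -> (u \in A) = (v \notin A).

Definition PB (t : tup) := [forall w, ((w \in A) && (w \notin [:: p0 t; p2 t; p4 t])) ==>
   ~~ two_adj w (p1 t) (p3 t) (p5 t)].
Definition X1 := [set t : tup | [&& cyc6 t, p0 t \in A, p0 t < p2 t, p2 t < p4 t & PB t]].
Definition X3 := [set t : tup | [&& cyc6 t, p0 t \in A,
   [exists w, [&& w \in A, w \notin [:: p0 t; p2 t; p4 t], adj w (p1 t) & adj w (p5 t)]] &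
   [exists b, [&& b \notin [:: p1 t; p3 t; p5 t], adj b (p2 t) & adj b (p4 t)]]]].

Lemma par a b c d e g : cyc6 (a,b,c,d,e,g) -> a \in A ->
  [/\ b \notin A, c \in A, d \notin A, e \in A & g \notin A].
Proof.
case/cyc6P => _ [h1 h2 h3 h4 [h5 h6]] aA.
have bA := adjA hbip h1 aA. have cA := adjB hbip h2 bA. have dA := adjA hbip h3 cA.
have eA := adjB hbip h4 dA. by rewrite bA cA dA eA (adjA hbip h5 eA).
Qed.

Lemma PB_rot2 t : PB (trot (trot t)) = PB t.
Proof.
case: t => [[[[[a b] c] d] e] g]; rewrite /PB /=.
by apply: eq_forallb => w; rewrite mem3_rot two_adj_rot.
Qed.
Lemma PB_refl t : PB (trefl t) = PB t.
Proof.
case: t => [[[[[a b] c] d] e] g]; rewrite /PB /=.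
by apply: eq_forallb => w; rewrite mem3_swap two_adj_rev.
Qed.

Lemma sort_tup (P : tup -> bool) t : (forall t, P (trot (trot t)) = P t) ->
  (forall t, P (trefl t) = P t) -> cyc6 t -> p0 t \in A -> P t ->
  exists t', [&& cyc6 t', p0 t' \in A, p0 t' < p2 t', p2 t' < p4 t' & P t'] /\ E6 t' = E6 t.
Proof.
move=> Pr Pf; case: t => [[[[[a b] c] d] e] g] hc; rewrite [p0 _]/= => aA hP.
have [_ cA _ eA _] := par hc aA.
have [[_ ac _ ae _] _ [_ ce _] _ _] := uniq6P (proj1 (cyc6P hc)).
have hc2 : cyc6 (c,d,e,g,a,b) by rewrite -[(c,d,e,g,a,b)]/(trot (trot (a,b,c,d,e,g))) !cyc6_rot.
have hc4 : cyc6 (e,g,a,b,c,d) by rewrite -[(e,g,a,b,c,d)]/(trot (trot (c,d,e,g,a,b))) !cyc6_rot.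
have E2 : E6 (c,d,e,g,a,b) = E6 (a,b,c,d,e,g) by rewrite -[(c,d,e,g,a,b)]/(trot (trot (a,b,c,d,e,g))) !E6_rot.
have E4 : E6 (e,g,a,b,c,d) = E6 (a,b,c,d,e,g) by rewrite -[(e,g,a,b,c,d)]/(trot (trot (c,d,e,g,a,b))) !E6_rot.
have P2 : P (c,d,e,g,a,b) by rewrite -[(c,d,e,g,a,b)]/(trot (trot (a,b,c,d,e,g))) Pr.
have P4 : P (e,g,a,b,c,d) by rewrite -[(e,g,a,b,c,d)]/(trot (trot (c,d,e,g,a,b))) Pr.
move: ac ce ae; rewrite !ordeqE => ac ce ae.
case: (order3 ac ce ae) => [/andP [h1 h2]|[/andP [h1 h2]|[/andP [h1 h2]|[/andP [h1 h2]|[/andP [h1 h2]|/andP [h1 h2]]]]]].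
- by exists (a,b,c,d,e,g); rewrite hc hP /= aA h1 h2.
- by exists (c,d,e,g,a,b); rewrite hc2 P2 E2 /= cA h1 h2.
- by exists (e,g,a,b,c,d); rewrite hc4 P4 E4 /= eA h1 h2.
- exists (trefl (a,b,c,d,e,g)); rewrite cyc6_refl E6_refl Pf.
  by rewrite hc hP /= aA h1 h2.
- exists (trefl (c,d,e,g,a,b)); rewrite cyc6_refl E6_refl Pf E2.
  by rewrite hc2 P2 /= cA h1 h2.
- exists (trefl (e,g,a,b,c,d)); rewrite cyc6_refl E6_refl Pf E4.
  by rewrite hc4 P4 /= eA h1 h2.
Qed.

Lemma wrongA y b1 x b3 z b2 w bt : cyc6 (y,b1,x,b3,z,b2) -> y \in A -> w \in A ->
  w \notin [:: y;x;z] -> adj w b1 -> adj w b2 -> bt \notin [:: b1;b3;b2] ->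
  adj bt y -> adj bt x -> False.
Proof.
move=> hc yA wA wn hw1 hw2 btn hty htx.
have [hu [h1 h2 h3 h4 [h5 h6]]] := cyc6P hc.
have [[yb1 yx yb3 yz yb2] [b1x b1b3 b1z b1b2] [xb3 xz xb2] [b3z b3b2] zb2] := uniq6P hu.
have [wy wx wz] := notin3 wn. have [tb1 tb3 tb2] := notin3 btn.
have [_ xA _ zA _] := par hc yA.
apply: (@noC8 _ _ hfree _ hbip x z w y b3 b2 b1 bt) => //; first [neqs | by rewrite adjC].
Qed.

Lemma L1 y b1 x b3 z b2 w c : cyc6 (y,b1,x,b3,z,b2) -> y \in A -> w \in A ->
  w \notin [:: y;x;z] -> adj w b1 -> adj w b2 -> adj y c -> adj c x -> c \in [:: b1;b3;b2].
Proof.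
move=> hc yA wA wn hw1 hw2 hyc hcx; apply/negPn/negP => cn.
have [hu [h1 h2 h3 h4 [h5 h6]]] := cyc6P hc.
have [[yb1 yx yb3 yz yb2] [b1x b1b3 b1z b1b2] [xb3 xz xb2] [b3z b3b2] zb2] := uniq6P hu.
have [wy wx wz] := notin3 wn. have [cb1 cb3 cb2] := notin3 cn.
have [_ xA _ zA _] := par hc yA.
apply: (@noC8 _ _ hfree _ hbip w y x z b1 c b3 b2) => //; first [neqs | by rewrite adjC].
Qed.

Lemma L2 y b1 x b3 z b2 w c : cyc6 (y,b1,x,b3,z,b2) -> y \in A -> w \in A ->
  w \notin [:: y;x;z] -> adj w b1 -> adj w b2 -> adj y c -> adj c z -> c \in [:: b1;b3;b2].
Proof.
move=> hc yA wA wn hw1 hw2 hyc hcz.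
rewrite -mem3_rev; apply: (L1 (y := y) (c := c) (b1 := b2) (x := z) (b3 := b3) (z := x) (b2 := b1) (w := w)) => //.
  by rewrite -[(y,b2,z,b3,x,b1)]/(trefl (y,b1,x,b3,z,b2)) cyc6_refl.
by rewrite mem3_swap.
Qed.

Lemma LQ y b1 x b3 z b2 w bt p q : cyc6 (y,b1,x,b3,z,b2) -> y \in A -> w \in A ->
  w \notin [:: y;x;z] -> adj w b1 -> adj w b2 -> bt \notin [:: b1;b3;b2] ->
  adj bt x -> adj bt z -> adj y p -> adj p q -> adj q b3 -> q != y -> p != b3 ->
  q \in [:: x; z].
Proof.
move=> hc yA wA wn hw1 hw2 btn htx htz hyp hpq hqb qy pb3; apply/negPn/negP => qn.
have [hu [h1 h2 h3 h4 [h5 h6]]] := cyc6P hc.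
have [[yb1 yx yb3 yz yb2] [b1x b1b3 b1z b1b2] [xb3 xz xb2] [b3z b3b2] zb2] := uniq6P hu.
have [tb1 tb3 tb2] := notin3 btn.
have [b1A xA b3A zA b2A] := par hc yA.
have qA : q \in A by rewrite (hbip hqb).
have [qx qz] : q != x /\ q != z by move: qn; rewrite !inE negb_or => /andP.
case: (eqVneq p bt) => [pe|pbt].
  subst p; have := L1 hc yA wA wn hw1 hw2 hyp htx; by rewrite (negPf btn).
case: (eqVneq p b1) => [pe|pb1].
  subst p; apply: (@noC8 _ _ hfree _ hbip y q x z b1 b3 bt b2) => //; first [neqs | by rewrite adjC].
apply: (@noC8 _ _ hfree _ hbip y q z x p b3 bt b1) => //; first [neqs | by rewrite adjC].
Qed.

Lemma PB_mem t w : PB t -> w \in A -> two_adj w (p1 t) (p3 t) (p5 t) ->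
  w \in [:: p0 t; p2 t; p4 t].
Proof.
move=> /forallP /(_ w) hP wA htw; apply/negPn/negP => wn.
by move: hP; rewrite wA wn htw.
Qed.

Lemma X1_inj : {in X1 &, injective (fun t => (p1 t, p3 t, p5 t))}.
Proof.
move=> [[[[[a b] c] d] e] g] [[[[[a' b'] c'] d'] e'] g']; rewrite !inE.
move=> /and5P [hc aA ac ce hP] /and5P [hc' aA' ac' ce' hP'] /= [eb ed eg]; subst b' d' g'.
move: ac ce ac' ce'; rewrite /= => ac ce ac' ce'.
have [_ [h1 h2 h3 h4 [h5 h6]]] := cyc6P hc'.
have [_ cA' _ eA' _] := par hc' aA'.
have ma : a' \in [:: a; c; e].
  apply: (PB_mem hP aA'); by rewrite /two_adj h1 (adjC _ a' g) h6 !orbT.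
have mc : c' \in [:: a; c; e].
  apply: (PB_mem hP cA'); by rewrite /two_adj (adjC _ c' b) h2 h3.
have me : e' \in [:: a; c; e].
  apply: (PB_mem hP eA'); by rewrite /two_adj (adjC _ e' d) h4 h5 !orbT.
move: ma mc me; rewrite !inE !ordeqE => ma mc me.
have [/val_inj -> /val_inj -> /val_inj ->] := sort3 ac ce ac' ce' ma mc me.
by [].
Qed.

Lemma X1_card : #|X1| <= #|~: A| ^ 3.
Proof.
rewrite -(card_in_imset X1_inj).
apply: (@leq_trans #|setX (setX (~: A) (~: A)) (~: A)|).
  apply: subset_leq_card; apply/subsetP => u /imsetP [[[[[[a b] c] d] e] g]].
  rewrite inE => /and5P [hc aA _ _ _] ->.
  have [bA _ dA _ gA] := par hc aA.
  by rewrite !inE /= bA dA gA.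
by rewrite !cardsX !expnS expn0 muln1 mulnA.
Qed.

Lemma bad_norm y b1 x b3 z b2 w bt : cyc6 (y,b1,x,b3,z,b2) -> y \in A -> w \in A ->
  w \notin [:: y;x;z] -> adj w b1 -> adj w b2 -> bt \notin [:: b1;b3;b2] ->
  two_adj bt y x z -> (y,b1,x,b3,z,b2) \in X3.
Proof.
move=> hc yA wA wn hw1 hw2 btn.
rewrite /two_adj => /orP [/andP [h1 h2]|/orP [/andP [h1 h2]|/andP [h1 h2]]].
- by case: (wrongA hc yA wA wn hw1 hw2 btn h1 h2).
- rewrite inE hc yA /=; apply/andP; split.
    by apply/existsP; exists w; rewrite wA wn hw1 hw2.
  by apply/existsP; exists bt; rewrite btn h1 h2.
- have hc' : cyc6 (y,b2,z,b3,x,b1) by rewrite -[(y,b2,z,b3,x,b1)]/(trefl (y,b1,x,b3,z,b2)) cyc6_refl.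
  have wn' : w \notin [:: y; z; x] by rewrite mem3_swap.
  have btn' : bt \notin [:: b2; b3; b1] by rewrite mem3_rev.
  by case: (wrongA hc' yA wA wn' hw2 hw1 btn' h2 h1).
Qed.

Lemma card3 (T : finType) (a b c : T) : #|[set a; b; c]| <= 3.
Proof.
rewrite cardsU; apply: (leq_trans (leq_subr _ _)); rewrite cards2 cards1; by case: (a != b).
Qed.

Lemma X3_fiber k : #|[set t in X3 | (p0 t, p3 t) == k]| <= 36.
Proof.
case: (set_0Vmem [set t in X3 | (p0 t, p3 t) == k]) => [-> | [t0]]; first by rewrite cards0.
case: t0 => [[[[[y b1] x] b3] z] b2]; rewrite !inE /= => /andP [/and4P [hc yA]].
move=> /existsP [w /and4P [wA wn hw1 hw2]] /existsP [bt /and3P [btn htx htz]] /eqP ek.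
pose S0 := [set b1; b3; b2]. pose P0 := [set x; z].
pose gg := fun t : tup => (p1 t, p2 t, p4 t, p5 t).
have ginj : {in [set t in X3 | (p0 t, p3 t) == k] &, injective gg}.
  move=> [[[[[a b] c] d] e] g] [[[[[a' b'] c'] d'] e'] g']; rewrite !inE /=.
  move=> /andP [_ /eqP e1] /andP [_ /eqP e2] [-> -> -> ->].
  by rewrite -e2 in e1; case: e1 => -> ->.
rewrite -(card_in_imset ginj).
apply: (@leq_trans #|setX (setX (setX S0 P0) P0) S0|).
  apply: subset_leq_card; apply/subsetP => u /imsetP [[[[[[a b] c] d] e] g]].
  rewrite !inE /= => /andP [/and4P [hc' _ _ _] /eqP ek'] ->.
  rewrite -ek in ek'; case: ek' => ea ed; subst a d.
  have [hu [h1 h2 h3 h4 [h5 h6]]] := cyc6P hc'.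
  have [[yb yc _ ye yg] [bc bb3 be bg] [cb3 ce cg] [b3e b3g] eg] := uniq6P hu.
  have mc : c \in [:: x; z].
    apply: (LQ hc yA wA wn hw1 hw2 btn htx htz h1 h2 h3) => //; by rewrite eq_sym.
  have me : e \in [:: x; z].
    apply: (LQ hc yA wA wn hw1 hw2 btn htx htz (p := g)); rewrite 1?adjC //; by rewrite eq_sym.
  have mb : b \in [:: b1; b3; b2].
    have mc' := mc; rewrite !inE in mc'; case/orP: mc' => /eqP ec; subst c.
      by apply: (L1 hc yA wA wn hw1 hw2 h1 h2).
    by apply: (L2 hc yA wA wn hw1 hw2 h1 h2).
  have mg : g \in [:: b1; b3; b2].
    have hyg : adj y g by rewrite adjC.
    have hge : adj g e by rewrite adjC.
    have me' := me; rewrite !inE in me'; case/orP: me' => /eqP ec; subst e.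
      by apply: (L1 hc yA wA wn hw1 hw2 hyg hge).
    by apply: (L2 hc yA wA wn hw1 hw2 hyg hge).
  move: mb mc me mg; rewrite /gg /= !inE -!orbA => -> -> -> ->; done.
rewrite !cardsX.
have h1 := card3 b1 b3 b2. have h2 : #|P0| <= 2 by rewrite cards2; case: (x != z).
rewrite -/S0 in h1.
apply: (@leq_trans (3 * 2 * 2 * 3)) => //.
by apply: leq_mul => //; apply: leq_mul => //; apply: leq_mul.
Qed.

Lemma X3_card : #|X3| <= 36 * (n * n).
Proof.
rewrite -sum1_card (partition_big (fun t => (p0 t, p3 t)) predT) //=.
apply: (@leq_trans (\sum_(k : 'I_n * 'I_n) 36)).
  apply: leq_sum => k _.
  rewrite sum1_card.
  apply: (leq_trans _ (X3_fiber k)).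
  by apply: eq_leq; apply: eq_card => i; rewrite in_set.
rewrite (eq_bigl (fun k => k \in [set: 'I_n * 'I_n])); last by move=> k; rewrite inE.
by rewrite big_const cardsT card_prod card_ord iter_addn_0 mulnC.
Qed.

End Bip2.

Lemma bipC (A : {set 'I_n}) : (forall u v, adj u v -> (u \in A) = (v \notin A)) ->
  forall u v, adj u v -> (u \in ~: A) = (v \notin ~: A).
Proof. by move=> hb u v h; rewrite !inE (hb u v h) negbK. Qed.

Lemma tri (A : {set 'I_n}) (hbip : forall u v, adj u v -> (u \in A) = (v \notin A)) t :
  cyc6 t -> p0 t \in A ->
  exists2 t', (t' \in X1 A) || (t' \in X1 (~: A)) || (t' \in X3 A) & E6 t' = E6 t.
Proof.
move=> hc h0.
case: (boolP (PB A t)) => hPB.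
  have [t' [/and5P [c1 c2 c3 c4 c5] e]] := sort_tup hbip (PB_rot2 A) (PB_refl A) hc h0 hPB.
  by exists t' => //; rewrite inE c1 c2 c3 c4 c5.
move: hPB => /forallPn [w]; rewrite negb_imply negbK => /andP [/andP [wA wn] hw].
have hbC := bipC hbip.
have hcu : cyc6 (trot t) by rewrite cyc6_rot.
move: hc h0 wn hw hcu; case: t => [[[[[a0 a1] a2] a3] a4] a5] hc h0 wn hw hcu.
rewrite /= in h0 wn hw.
have [a1A a2A a3A a4A a5A] := par hbip hc h0.
have h0u : p0 (trot (a0,a1,a2,a3,a4,a5)) \in ~: A by rewrite /= inE a1A.
case: (boolP (PB (~: A) (trot (a0,a1,a2,a3,a4,a5)))) => hPB'.
  have [t' [/and5P [c1 c2 c3 c4 c5] e]] := sort_tup hbC (PB_rot2 (~:A)) (PB_refl (~:A)) hcu h0u hPB'.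
  by exists t'; [rewrite [t' \in X1 (~: A)]in_set c1 c2 c3 c4 c5 orbT | rewrite e E6_rot].
move: hPB' => /forallPn [bt]; rewrite negb_imply negbK /= => /andP [/andP [btA btn] hbt].
have hc2 : cyc6 (a2,a3,a4,a5,a0,a1)
  by rewrite -[(a2,a3,a4,a5,a0,a1)]/(trot (trot (a0,a1,a2,a3,a4,a5))) !cyc6_rot.
have hc4 : cyc6 (a4,a5,a0,a1,a2,a3)
  by rewrite -[(a4,a5,a0,a1,a2,a3)]/(trot (trot (a2,a3,a4,a5,a0,a1))) !cyc6_rot.
have E2 : E6 (a2,a3,a4,a5,a0,a1) = E6 (a0,a1,a2,a3,a4,a5)
  by rewrite -[(a2,a3,a4,a5,a0,a1)]/(trot (trot (a0,a1,a2,a3,a4,a5))) !E6_rot.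
have E4 : E6 (a4,a5,a0,a1,a2,a3) = E6 (a0,a1,a2,a3,a4,a5)
  by rewrite -[(a4,a5,a0,a1,a2,a3)]/(trot (trot (a2,a3,a4,a5,a0,a1))) !E6_rot E2.
move: hw; rewrite /two_adj => /orP [/andP [hw1 hw3]|/orP [/andP [hw3 hw5]|/andP [hw5 hw1]]].
- exists (a2,a3,a4,a5,a0,a1) => //.
  have wn' : w \notin [:: a2; a4; a0] by rewrite mem3_rot.
  have btn' : bt \notin [:: a3; a5; a1] by rewrite mem3_rot.
  by rewrite (bad_norm hbip hc2 a2A wA wn' hw3 hw1 btn' hbt) orbT.
- exists (a4,a5,a0,a1,a2,a3) => //.
  have wn' : w \notin [:: a4; a0; a2] by rewrite -mem3_rot.
  have btn' : bt \notin [:: a5; a1; a3] by rewrite -mem3_rot.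
  have hbt' : two_adj bt a4 a0 a2 by rewrite two_adj_rot.
  by rewrite (bad_norm hbip hc4 a4A wA wn' hw5 hw3 btn' hbt') orbT.
- exists (a0,a1,a2,a3,a4,a5) => //.
  have hbt' : two_adj bt a0 a2 a4 by rewrite -two_adj_rot.
  by rewrite (bad_norm hbip hc h0 wA wn hw1 hw5 btn hbt') orbT.
Qed.

Lemma num_bound (A : {set 'I_n}) (hbip : forall u v, adj u v -> (u \in A) = (v \notin A)) :
  num_Ck 6 E <= #|A| ^ 3 + #|~: A| ^ 3 + 36 * (n * n).
Proof.
rewrite /num_Ck.
set CS := [set S | _].
have sub : CS \subset [set E6 t | t in X1 A :|: X1 (~: A) :|: X3 A].
  apply/subsetP => S; rewrite inE => /andP [SE hS].
  have [t [hc ->]] := C6_tup SE hS.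
  have [t1 [hc1 h01 e1]] : exists t1, [/\ cyc6 t1, p0 t1 \in A & E6 t1 = E6 t].
    case h0: (p0 t \in A); first by exists t.
    exists (trot t); rewrite cyc6_rot E6_rot; split => //.
    move: hc h0; case: t => [[[[[a0 a1] a2] a3] a4] a5] /cyc6P [_ [h1 _ _ _ _]] /= h0.
    by apply: (adjB hbip h1); rewrite h0.
  have [t' ht' e'] := tri hbip hc1 h01.
  by apply/imsetP; exists t'; [rewrite !in_setU | rewrite e' e1].
apply: (leq_trans (subset_leq_card sub)).
apply: (leq_trans (leq_imset_card _ _)).
have U : forall (B C : {set tup}), #|B :|: C| <= #|B| + #|C|
  by move=> B C; rewrite cardsU leq_subr.
apply: (leq_trans (U _ _)); apply: leq_add; last exact: X3_card hbip.
apply: (leq_trans (U _ _)); rewrite addnC; apply: leq_add.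
  by have := X1_card (bipC hbip); rewrite setCK.
exact: X1_card hbip.
Qed.

Lemma bip_of (A : {set 'I_n}) : simple_graph E -> [forall e in E, #|e :&: A| == 1] ->
  forall u v, adj u v -> (u \in A) = (v \notin A).
Proof.
move=> /forallP hs /forallP hA u v huv0.
have huv : [set u; v] \in E := huv0.
have := hs [set u; v]; rewrite huv /= cards2 eqSS eqb1 => uv.
have := hA [set u; v]; rewrite huv /=.
case uA: (u \in A); case vA: (v \in A) => //=.
  have -> : [set u; v] :&: A = [set u; v].
    by apply/setP => x; rewrite !inE; case/boolP: (x == u) => [/eqP ->|_]; rewrite ?uA //=;
      case/boolP: (x == v) => [/eqP ->|_]; rewrite ?vA.
  by rewrite cards2 uv.
have -> : [set u; v] :&: A = set0.
  by apply/setP => x; rewrite !inE; case/boolP: (x == u) => [/eqP ->|_]; rewrite ?uA //=;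
    case/boolP: (x == v) => [/eqP ->|_]; rewrite ?vA.
by rewrite cards0.
Qed.

End Main.

Lemma cube_le a b : a ^ 3 + b ^ 3 <= (a + b) ^ 3.
Proof. rewrite !expnS !expn0 !muln1. nia. Qed.

Lemma upper n : ex_bip_C6_C8 n <= n ^ 3 + 36 * (n * n).
Proof.
apply/bigmax_leqP => E /and3P [hs /existsP [A hA] hf].
have hb := bip_of hs hA.
apply: (leq_trans (num_bound hf hb)); rewrite leq_add2r.
have hn := cardsC A; rewrite card_ord in hn.
by apply: (leq_trans (cube_le _ _)); rewrite hn.
Qed.


Lemma set2_eq n (a b c d : 'I_n) :
  ([set a; b] == [set c; d]) = ((a == c) && (b == d)) || ((a == d) && (b == c)).
Proof.
apply/eqP/idP.
  move=> e.
  have ha : a \in [set c; d] by rewrite -e !inE eqxx.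
  have hb : b \in [set c; d] by rewrite -e !inE eqxx orbT.
  have hc : c \in [set a; b] by rewrite e !inE eqxx.
  have hd : d \in [set a; b] by rewrite e !inE eqxx orbT.
  move: ha hb hc hd; rewrite !inE !ordeqE; lia.
by case/orP => /andP [/eqP -> /eqP ->] //; rewrite setUC.
Qed.

Lemma pig4 (a b c d : nat) : a < 3 -> b < 3 -> c < 3 -> d < 3 ->
  a != b -> a != c -> a != d -> b != c -> b != d -> c != d -> False.
Proof.
by case: a => [|[|[|a]]] //; case: b => [|[|[|b]]] //; case: c => [|[|[|c]]] //;
  case: d => [|[|[|d]]].
Qed.

Lemma bflipT (a b : bool) : a = ~~ b -> a -> b = false.
Proof. by case: a; case: b. Qed.
Lemma bflipF (a b : bool) : a = ~~ b -> a = false -> b.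
Proof. by case: a; case: b. Qed.

Lemma pig8 (x0 x1 x2 x3 x4 x5 x6 x7 : nat) :
  (x0 < 3) = ~~ (x1 < 3) -> (x1 < 3) = ~~ (x2 < 3) -> (x2 < 3) = ~~ (x3 < 3) ->
  (x3 < 3) = ~~ (x4 < 3) -> (x4 < 3) = ~~ (x5 < 3) -> (x5 < 3) = ~~ (x6 < 3) ->
  (x6 < 3) = ~~ (x7 < 3) ->
  x0 != x2 -> x0 != x4 -> x0 != x6 -> x2 != x4 -> x2 != x6 -> x4 != x6 ->
  x1 != x3 -> x1 != x5 -> x1 != x7 -> x3 != x5 -> x3 != x7 -> x5 != x7 -> False.
Proof.
move=> s0 s1 s2 s3 s4 s5 s6 d02 d04 d06 d24 d26 d46 d13 d15 d17 d35 d37 d57.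
case h0 : (x0 < 3).
  have h1 := bflipT s0 h0. have h2 := bflipF s1 h1. have h3 := bflipT s2 h2.
  have h4 := bflipF s3 h3. have h5 := bflipT s4 h4. have h6 := bflipF s5 h5.
  exact: (pig4 h0 h2 h4 h6 d02 d04 d06 d24 d26 d46).
have h1 := bflipF s0 h0. have h2 := bflipT s1 h1. have h3 := bflipF s2 h2.
have h4 := bflipT s3 h3. have h5 := bflipF s4 h4. have h6 := bflipT s5 h5.
have h7 := bflipF s6 h6.
exact: (pig4 h1 h3 h5 h7 d13 d15 d17 d35 d37 d57).
Qed.

Lemma uniq_interleave3 (T : eqType) (a1 a2 a3 b1 b2 b3 : T) :
  uniq [:: a1;b1;a2;b2;a3;b3] = uniq ([:: a1;a2;a3] ++ [:: b1;b2;b3]).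
Proof. by apply: perm_uniq; apply/permP => p /=; lia. Qed.

Section Lower.
Variable m : nat.
Local Notation n := m.+3.
Definition v0 : 'I_n := @Ordinal n 0 isT.
Definition v1 : 'I_n := @Ordinal n 1 isT.
Definition v2 : 'I_n := @Ordinal n 2 isT.
Definition A0 : {set 'I_n} := v0 |: [set v1; v2].
Definition E0 : {set {set 'I_n}} := [set [set u; v] | u in A0, v in ~: A0].

Lemma inA0 (x : 'I_n) : (x \in A0) = (x < 3).
Proof. rewrite !inE !ordeqE /=; lia. Qed.

Lemma cardA0 : #|A0| = 3.
Proof. by rewrite cardsU1 cards2 !inE. Qed.

Lemma E0_simple : simple_graph E0.
Proof.
apply/forallP => e; apply/implyP => /imset2P [u v uA vA ->]; rewrite cards2.
rewrite inE in vA.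
have : u != v by apply/eqP => ee; subst; rewrite uA in vA.
by move=> ->.
Qed.

Lemma E0_bip : [forall e in E0, #|e :&: A0| == 1].
Proof.
apply/forallP => e; apply/implyP => /imset2P [u v uA vA ->].
rewrite inE in vA.
have -> : [set u; v] :&: A0 = [set u].
  apply/setP => x; rewrite in_setI in_set2 in_set1.
  case: (x =P u) => [->|_]; first by rewrite uA.
  by case: (x =P v) => [->|_] //=; rewrite (negPf vA).
by rewrite cards1.
Qed.

Definition hbip0 := bip_of E0_simple E0_bip.

Lemma E0_free : Ck_free 8 E0.
Proof.
rewrite /Ck_free /num_Ck cards_eq0; apply/eqP/setP => S; rewrite !inE.
apply/negbTE/negP => /andP [SE /existsP [f /andP [/injectiveP finj /eqP eS]]]; subst S.
have hadj : forall i : 'I_8, (f i \in A0) = (f (ordS i) \notin A0).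
  move=> i; apply: hbip0; rewrite /adj; apply: (subsetP SE); by apply: imset_f.
pose o0 := @Ordinal 8 0 isT. pose o1 := @Ordinal 8 1 isT. pose o2 := @Ordinal 8 2 isT.
pose o3 := @Ordinal 8 3 isT. pose o4 := @Ordinal 8 4 isT. pose o5 := @Ordinal 8 5 isT.
pose o6 := @Ordinal 8 6 isT. pose o7 := @Ordinal 8 7 isT.
have s0 := hadj o0. have s1 := hadj o1. have s2 := hadj o2. have s3 := hadj o3.
have s4 := hadj o4. have s5 := hadj o5. have s6 := hadj o6.
rewrite (_ : ordS o0 = o1) in s0; last by apply: val_inj.
rewrite (_ : ordS o1 = o2) in s1; last by apply: val_inj.
rewrite (_ : ordS o2 = o3) in s2; last by apply: val_inj.
rewrite (_ : ordS o3 = o4) in s3; last by apply: val_inj.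
rewrite (_ : ordS o4 = o5) in s4; last by apply: val_inj.
rewrite (_ : ordS o5 = o6) in s5; last by apply: val_inj.
rewrite (_ : ordS o6 = o7) in s6; last by apply: val_inj.
have d : forall i j : 'I_8, i != j -> nat_of_ord (f i) != nat_of_ord (f j).
  by move=> i j ij; rewrite -ordeqE (inj_eq finj).
have d02 := d o0 o2 isT. have d04 := d o0 o4 isT. have d06 := d o0 o6 isT.
have d24 := d o2 o4 isT. have d26 := d o2 o6 isT. have d46 := d o4 o6 isT.
have d13 := d o1 o3 isT. have d15 := d o1 o5 isT. have d17 := d o1 o7 isT.
have d35 := d o3 o5 isT. have d37 := d o3 o7 isT. have d57 := d o5 o7 isT.
move: s0 s1 s2 s3 s4 s5 s6 d02 d04 d06 d24 d26 d46 d13 d15 d17 d35 d37 d57.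
rewrite !inA0.
clear hadj d finj SE.
move: (nat_of_ord (f o0)) (nat_of_ord (f o1)) (nat_of_ord (f o2)) (nat_of_ord (f o3))
  (nat_of_ord (f o4)) (nat_of_ord (f o5)) (nat_of_ord (f o6)) (nat_of_ord (f o7)).
move=> x0 x1 x2 x3 x4 x5 x6 x7.
exact: pig8.
Qed.

Definition T3 : {set 'I_n * 'I_n * 'I_n} :=
  [set x | [&& x.1.1 \notin A0, x.1.2 \notin A0, x.2 \notin A0, x.1.1 != x.1.2,
              x.1.2 != x.2 & x.1.1 != x.2]].
Definition phi (x : 'I_n * 'I_n * 'I_n) := E6 (v0, x.1.1, v1, x.1.2, v2, x.2).

Lemma adjE0 u v : u \in A0 -> v \notin A0 -> adj E0 u v /\ adj E0 v u.
Proof.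
move=> uA vA; have h : adj E0 u v by apply/imset2P; exists u v => //; rewrite in_setC.
by split => //; rewrite adjC.
Qed.

Lemma phi_in x : x \in T3 -> phi x \in [set S : {set {set 'I_n}} | (S \subset E0) && is_Ck_edges 6 S].
Proof.
case: x => [[p q] r]; rewrite inE /= => /and5P [pA qA rA pq /andP [qr pr]].
rewrite inE /phi; apply: tup_C6.
have v0A : v0 \in A0 by rewrite inA0. have v1A : v1 \in A0 by rewrite inA0.
have v2A : v2 \in A0 by rewrite inA0.
have [h1 h2] := adjE0 v0A pA. have [h3 h4] := adjE0 v1A pA.
have [h5 h6] := adjE0 v1A qA. have [h7 h8] := adjE0 v2A qA.
have [h9 h10] := adjE0 v2A rA. have [h11 h12] := adjE0 v0A rA.
rewrite /= /cyc6' h1 h4 h5 h8 h9 h12 !andbT.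
have np : p \notin [:: v0; v1; v2] by move: pA; rewrite !inE.
have nq : q \notin [:: v0; v1; v2] by move: qA; rewrite !inE.
have nr : r \notin [:: v0; v1; v2] by move: rA; rewrite !inE.
rewrite uniq_interleave3 cat_uniq; apply/and3P; split => //.
  apply/hasPn => x; rewrite !inE => /orP [/eqP->|/orP [/eqP->|/eqP->]];
    [move: np | move: nq | move: nr]; by rewrite !inE.
by rewrite /= !inE negb_or pq pr qr.
Qed.

Lemma s2eq (v x a b : 'I_n) : v \in A0 -> x \notin A0 -> a \in A0 -> b \notin A0 ->
  ([set v; x] == [set a; b]) = (v == a) && (x == b).
Proof.
move=> vA xA aA bA; rewrite set2_eq.
have vb : (v == b) = false by apply/negbTE; apply/eqP => e; subst; rewrite vA in bA.
by rewrite vb andFb orbF.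
Qed.

Lemma phiE (x : 'I_n * 'I_n * 'I_n) : phi x =
  [set [set v0; x.1.1]; [set v1; x.1.1]; [set v1; x.1.2]; [set v2; x.1.2];
       [set v2; x.2]; [set v0; x.2]].
Proof.
by rewrite /phi /= /E6' (setUC [set x.1.1] [set v1]) (setUC [set x.1.2] [set v2])
  (setUC [set x.2] [set v0]).
Qed.

Lemma memphi (v y : 'I_n) (x : 'I_n * 'I_n * 'I_n) : v \in A0 -> y \notin A0 ->
  x.1.1 \notin A0 -> x.1.2 \notin A0 -> x.2 \notin A0 ->
  ([set v; y] \in phi x) = [|| (v == v0) && (y == x.1.1), (v == v1) && (y == x.1.1),
     (v == v1) && (y == x.1.2), (v == v2) && (y == x.1.2), (v == v2) && (y == x.2) |
     (v == v0) && (y == x.2)].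
Proof.
move=> vA yA h1 h2 h3.
have a0 : v0 \in A0 by rewrite inA0. have a1 : v1 \in A0 by rewrite inA0.
have a2 : v2 \in A0 by rewrite inA0.
rewrite phiE !inE !s2eq //.
by rewrite -!orbA.
Qed.

Lemma inT3 x : (x \in T3) = [&& x.1.1 \notin A0, x.1.2 \notin A0, x.2 \notin A0, x.1.1 != x.1.2,
              x.1.2 != x.2 & x.1.1 != x.2].
Proof. by rewrite /T3 inE. Qed.

Lemma phi_inj : {in T3 &, injective phi}.
Proof.
move=> [[p q] r] [[p' q'] r']; rewrite !inT3 /=.
move=> /and5P [pA qA rA pq /andP [qr pr]] /and5P [pA' qA' rA' pq' /andP [qr' pr']] e.
have a0 : v0 \in A0 by rewrite inA0. have a1 : v1 \in A0 by rewrite inA0.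
have a2 : v2 \in A0 by rewrite inA0.
have mem : forall v y, v \in A0 -> y \notin A0 ->
   [set v; y] \in phi (p,q,r) -> [set v; y] \in phi (p',q',r').
  by move=> v y _ _; rewrite e.
have m1 := mem v0 p a0 pA. have m2 := mem v1 p a1 pA.
have m3 := mem v1 q a1 qA. have m4 := mem v2 q a2 qA.
have m5 := mem v2 r a2 rA. have m6 := mem v0 r a0 rA.
rewrite !memphi //= in m1 m2 m3 m4 m5 m6.
have v01 : (v0 == v1) = false by []. have v02 : (v0 == v2) = false by [].
have v12 : (v1 == v2) = false by [].
have v10 : (v1 == v0) = false by []. have v20 : (v2 == v0) = false by [].
have v21 : (v2 == v1) = false by [].
move: m1 m2 m3 m4 m5 m6; rewrite !eqxx ?v01 ?v02 ?v12 ?v10 ?v20 ?v21 /= ?orbF ?orbT.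
move=> /(_ isT) m1 /(_ isT) m2 /(_ isT) m3 /(_ isT) m4 /(_ isT) m5 /(_ isT) m6.
have ep : p = p'.
  case/orP: m1 => [/eqP //|/eqP e1]; case/orP: m2 => [/eqP //|/eqP e2].
  by move: qr'; rewrite -e1 -e2 eqxx.
have eq : q = q'.
  case/orP: m3 => [/eqP e1|/eqP //]; case/orP: m4 => [/eqP //|/eqP e2].
  by move: pr'; rewrite -e1 -e2 eqxx.
have er : r = r'.
  case/orP: m5 => [/eqP e1|/eqP //]; case/orP: m6 => [/eqP e2|/eqP //].
  by move: pq'; rewrite -e1 -e2 eqxx.
by rewrite ep eq er.
Qed.

Lemma cB : #|~: A0| = m.
Proof. have := cardsC A0; rewrite cardA0 card_ord add3n; by case. Qed.

Lemma cardD (f : 'I_n * 'I_n -> 'I_n * 'I_n * 'I_n) :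
  #|[set f u | u in setX (~: A0) (~: A0)]| <= m * m.
Proof. by apply: (leq_trans (leq_imset_card _ _)); rewrite cardsX cB. Qed.

Lemma T3_card : m ^ 3 <= #|T3| + 3 * (m * m).
Proof.
set B := ~: A0.
set Y := setX (setX B B) B.
have cY : #|Y| = m ^ 3 by rewrite !cardsX cB !expnS expn0 muln1 mulnA.
have sp := cardsID T3 Y.
have h1 : #|Y :&: T3| <= #|T3| by apply: subset_leq_card; apply: subsetIr.
pose D1 := [set (fun u : 'I_n * 'I_n => (u.1, u.1, u.2)) u | u in setX B B].
pose D2 := [set (fun u : 'I_n * 'I_n => (u.1, u.2, u.2)) u | u in setX B B].
pose D3 := [set (fun u : 'I_n * 'I_n => (u.1, u.2, u.1)) u | u in setX B B].
have sub : Y :\: T3 \subset D1 :|: D2 :|: D3.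
  apply/subsetP => [[[p q] r]]; rewrite in_setD !in_setX /= => /andP [nt /andP [/andP [pB qB] rB]].
  move: nt; rewrite in_set /= -!in_setC -/B pB qB rB /= => nt.
  case: (eqVneq p q) => [epq|pq].
    subst q; rewrite !in_setU; apply/orP; left; apply/orP; left.
    by apply/imsetP; exists (p, r) => //; rewrite in_setX pB rB.
  case: (eqVneq q r) => [eqr|qr].
    subst r; rewrite !in_setU; apply/orP; left; apply/orP; right.
    by apply/imsetP; exists (p, q) => //; rewrite in_setX pB qB.
  case: (eqVneq p r) => [epr|pr]; last by move: nt; rewrite pq qr pr.
  subst r; rewrite !in_setU; apply/orP; right.
  by apply/imsetP; exists (p, q) => //; rewrite in_setX pB qB.
have h2 : #|Y :\: T3| <= 3 * (m * m).
  apply: (leq_trans (subset_leq_card sub)).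
  have U : forall (C D : {set 'I_n * 'I_n * 'I_n}), #|C :|: D| <= #|C| + #|D|
    by move=> C D; rewrite cardsU leq_subr.
  apply: (leq_trans (U _ _)).
  have -> : 3 * (m * m) = m * m + m * m + m * m by rewrite !mulSn mul0n addn0 addnA.
  apply: leq_add; last exact: cardD.
  by apply: (leq_trans (U _ _)); apply: leq_add; exact: cardD.
rewrite -cY -sp; exact: leq_add.
Qed.

Lemma lower : m ^ 3 <= ex_bip_C6_C8 m.+3 + 3 * (m * m).
Proof.
apply: (leq_trans T3_card); rewrite leq_add2r.
apply: (@leq_trans (num_Ck 6 E0)); last first.
  apply: (leq_bigmax_cond (F := fun E => num_Ck 6 E) E0).
  rewrite E0_simple E0_free andbT /=; apply/existsP; exists A0; exact: E0_bip.
rewrite /num_Ck -(card_in_imset phi_inj); apply: subset_leq_card.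
by apply/subsetP => S /imsetP [x hx ->]; exact: phi_in hx.
Qed.

End Lower.

From mathcomp Require Import reals exp.
From mathcomp Require Import lra.
Import Order.TTheory GRing.Theory Num.Theory.

Lemma nat_bounds n : (3 <= n)%N ->
  (ex_bip_C6_C8 n <= n ^ 3 + 36 * (n * n))%N /\ (n ^ 3 <= ex_bip_C6_C8 n + 36 * (n * n))%N.
Proof.
move=> hn; split; first exact: upper.
have -> : n = (n - 3).+3 by lia.
have := lower (n - 3).
move: (ex_bip_C6_C8 (n - 3).+3) (n - 3) => e m h.
nia.
Qed.

Local Open Scope ring_scope.

Theorem theorem10 (R : realType) :
  exists C : R, exists N : nat, forall n : nat, (N <= n)%N ->
    `| (ex_bip_C6_C8 n)%:R - (n%:R : R) ^+ 3 | <= C * ((n%:R : R) `^ (5%:R / 2%:R)).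
Proof.
exists 36, 3%N => n hn.
have [h1 h2] := nat_bounds hn.
have H1 : ((ex_bip_C6_C8 n)%:R : R) <= (n ^ 3 + 36 * (n * n))%:R by rewrite ler_nat.
have H2 : ((n ^ 3)%:R : R) <= (ex_bip_C6_C8 n + 36 * (n * n))%:R by rewrite ler_nat.
rewrite ?natrD ?natrM ?natrX in H1. rewrite ?natrD ?natrM ?natrX in H2.
have n1 : (1 : R) <= n%:R by rewrite ler1n; move: hn; clear; lia.
apply: (@le_trans _ _ (36 * (n%:R : R) ^+ 2)).
  rewrite ler_distl; apply/andP; split; rewrite expr2; lra.
apply: ler_wpM2l => //.
rewrite -powR_mulrn; last by apply: (le_trans _ n1).
apply: ler_powR => //.
lra.
Qed.
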